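(* Let $L\subseteq Q$ be an extension of Lie algebras with $L$ semiprime. Then the following are equivalent: (i) $Q$ is an algebra of quotients of $L$; (ii) $Z(Q)=0$ and, for every $\mu\in A(Q)\setminus\{0\}$, there is an ideal $I$ of $L$ with $\mathrm{Ann}_L(I)=0$ such that $\mu\widetilde{I}\subseteq A_0$ and $0\neq \widetilde{I}\mu\subseteq A_0$, and moreover, if $\mu=\mathrm{ad}_q$ for some $q\in Q$, then also $\mu\widetilde{I}(L)\neq 0$ (i.e. there are $\alpha\in\widetilde I$ and $x\in L$ with $\mu(\alpha(x))\neq 0$).
   Context: All algebras are over a fixed commutative unital ring $\Phi$; associative algebras need not be unital. For a Lie algebra $Q$ and $x\in Q$, $\mathrm{ad}_x\colon Q\to Q$ is $y\mapsto[x,y]$, and $A(Q)$ is the associative subalgebra of $\mathrm{End}_\Phi(Q)$ generated by $\{\mathrm{ad}_x: x\in Q\}$. An extension of Lie algebras $L\subseteq Q$ means $L$ is a Lie subalgebra of $Q$. $A_Q(L)$ is the associative subalgebra of $A(Q)$ generated by $\{\mathrm{ad}_x:x\in L\}$ (operators on $Q$), and $A_0=\{\mu\in A(Q):\mu(L)\subseteq L\}$. For an ideal $I$ of $L$, $A_Q(I)$ is the subalgebra of $A(Q)$ generated by $\{\mathrm{ad}_x : x\in I\}$ and $\widetilde I$ denotes the two-sided ideal of $A_Q(L)$ generated by $\{\mathrm{ad}_x:x\in I\}$. For $X\subseteq L$, $\mathrm{Ann}_L(X)=\{a\in L: [a,x]=0\ \forall x\in X\}$ and $Z(L)=\mathrm{Ann}_L(L)$.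 A Lie algebra $L$ is semiprime if $[I,I]\neq0$ for every nonzero ideal $I$. $Q$ is an algebra of quotients of $L$ if for every nonzero $q\in Q$ there is an ideal $I$ of $L$ with $\mathrm{Ann}_L(I)=0$ and $0\neq[I,q]\subseteq L$. *)

(* Defs.v *)
(* Lie algebras over a commutative ring Phi, represented as
   Phi-modules (lmodType Phi) with a bracket; subsets as predicates Q -> Prop;
   operators on Q as functions Q -> Q (compared with Leibniz equality). *)
From mathcomp Require Import all_boot all_algebra.
Set Implicit Arguments.
Unset Strict Implicit.
Unset Printing Implicit Defensive.
Import GRing.Theory.
Local Open Scope ring_scope.

Section Lie.
Variables (Phi : comPzRingType) (Q : lmodType Phi) (br : Q -> Q -> Q).

Definition lie_bracket : Prop :=
  [/\ (forall a x y z, br (a *: x + y) z = a *: br x z + br y z),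
      (forall a x y z, br x (a *: y + z) = a *: br x y + br x z),
      (forall x, br x x = 0) &
      (forall x y z, br x (br y z) + br y (br z x) + br z (br x y) = 0)].

Definition submodule (S : Q -> Prop) : Prop :=
  [/\ S 0, (forall x y, S x -> S y -> S (x + y)) &
      (forall (a : Phi) x, S x -> S (a *: x))].

Definition lie_subalgebra (L : Q -> Prop) : Prop :=
  submodule L /\ (forall x y, L x -> L y -> L (br x y)).

Definition lie_ideal (L I : Q -> Prop) : Prop :=
  [/\ forall x, I x -> L x, submodule I &
      forall x y, L x -> I y -> I (br x y)].

Definition ann_zero (L X : Q -> Prop) : Prop :=
  forall a, L a -> (forall x, X x -> br a x = 0) -> a = 0.

Definition center_zero : Prop :=
  forall z, (forall y, br z y = 0) -> z = 0.

Definition semiprime (L : Q -> Prop) : Prop :=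
  forall I, lie_ideal L I -> (exists x, I x /\ x <> 0) ->
    exists x y, I x /\ I y /\ br x y <> 0.

Definition algebra_of_quotients (L : Q -> Prop) : Prop :=
  forall q, q <> 0 -> exists I, lie_ideal L I /\ ann_zero L I /\
    (forall x, I x -> L (br x q)) /\ (exists x, I x /\ br x q <> 0).

Definition ad (x : Q) : Q -> Q := fun y => br x y.

Definition op0 : Q -> Q := fun _ => 0.
Definition opadd (f g : Q -> Q) : Q -> Q := fun v => f v + g v.
Definition opscale (a : Phi) (f : Q -> Q) : Q -> Q := fun v => a *: f v.
Definition opmul (f g : Q -> Q) : Q -> Q := fun v => f (g v).

Inductive gen_alg (S : Q -> Prop) : (Q -> Q) -> Prop :=
  | ga_ad x : S x -> gen_alg S (ad x)
  | ga_0 : gen_alg S op0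
  | ga_add f g : gen_alg S f -> gen_alg S g -> gen_alg S (opadd f g)
  | ga_scale a f : gen_alg S f -> gen_alg S (opscale a f)
  | ga_mul f g : gen_alg S f -> gen_alg S g -> gen_alg S (opmul f g).

Definition AQ : (Q -> Q) -> Prop := gen_alg (fun _ => True).
Definition AQL (L : Q -> Prop) : (Q -> Q) -> Prop := gen_alg L.
Definition A0 (L : Q -> Prop) (mu : Q -> Q) : Prop :=
  AQ mu /\ forall x, L x -> L (mu x).

Inductive tilde (L I : Q -> Prop) : (Q -> Q) -> Prop :=
  | ti_ad x : I x -> tilde L I (ad x)
  | ti_0 : tilde L I op0
  | ti_add f g : tilde L I f -> tilde L I g -> tilde L I (opadd f g)
  | ti_scale a f : tilde L I f -> tilde L I (opscale a f)
  | ti_mull a f : AQL L a -> tilde L I f -> tilde L I (opmul a f)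
  | ti_mulr f a : tilde L I f -> AQL L a -> tilde L I (opmul f a).

End Lie.

(* Main.v *)
Require Import Defs.
From mathcomp Require Import all_boot all_algebra.
From Stdlib Require Import Classical FunctionalExtensionality.
Import GRing.Theory.
Local Open Scope ring_scope.
Set Implicit Arguments.
Unset Strict Implicit.

Section S.
Variables (Phi : comPzRingType) (Q : lmodType Phi) (br : Q -> Q -> Q).
Hypothesis HB : lie_bracket br.

Lemma brDl x y z : br (x + y) z = br x z + br y z.
Proof. case: HB => H1 _ _ _. by have := H1 1 x y z; rewrite !scale1r. Qed.
Lemma brDr x y z : br x (y + z) = br x y + br x z.
Proof. case: HB => _ H1 _ _. by have := H1 1 x y z; rewrite !scale1r. Qed.
Lemma br0l z : br 0 z = 0.
Proof. apply: (@addrI _ (br 0 z)). by rewrite addr0 -brDl addr0. Qed.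
Lemma br0r z : br z 0 = 0.
Proof. apply: (@addrI _ (br z 0)). by rewrite addr0 -brDr addr0. Qed.
Lemma brZl a x z : br (a *: x) z = a *: br x z.
Proof. case: HB => H1 _ _ _. by have := H1 a x 0 z; rewrite !addr0 br0l addr0. Qed.
Lemma brZr a x z : br x (a *: z) = a *: br x z.
Proof. case: HB => _ H1 _ _. by have := H1 a x z 0; rewrite !addr0 br0r addr0. Qed.
Lemma brNl x z : br (- x) z = - br x z.
Proof. by rewrite -scaleN1r brZl scaleN1r. Qed.
Lemma brNr x z : br x (- z) = - br x z.
Proof. by rewrite -scaleN1r brZr scaleN1r. Qed.
Lemma brC x y : br x y = - br y x.
Proof.
case: HB => _ _ H3 _.
have := H3 (x + y). rewrite brDl !brDr !H3 add0r addr0 => /eqP.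
by rewrite addr_eq0 => /eqP.
Qed.
Lemma jac1 x y z : br x (br y z) = br (br x y) z + br y (br x z).
Proof.
case: HB => _ _ _ H4.
have := H4 x y z. rewrite (brC z x) (brC z (br x y)) brNr.
move=> /eqP. rewrite -subr_eq0. move=> /eqP H.
apply/eqP; rewrite -subr_eq0; apply/eqP. rewrite -H. 
by rewrite subr0 opprD addrA addrAC.
Qed.

Lemma sub_opp (S : Q -> Prop) x : submodule S -> S x -> S (- x).
Proof. by case=> _ _ HZ Hx; rewrite -scaleN1r; apply: HZ. Qed.
Lemma sub_sub (S : Q -> Prop) x y : submodule S -> S x -> S y -> S (x - y).
Proof. move=> HS Hx Hy; case: (HS) => _ HA _; apply: HA => //; exact: sub_opp. Qed.

Variable L : Q -> Prop.
Hypothesis HL : lie_subalgebra br L.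
Hypothesis HP : semiprime br L.

Definition dense I := lie_ideal br L I /\ ann_zero br L I.

Lemma ideal_brr I x y : lie_ideal br L I -> I y -> L x -> I (br y x).
Proof.
case=> HIL HIS HIb Hy Hx; rewrite brC; apply: sub_opp => //; exact: HIb.
Qed.

Lemma ideal_L : lie_ideal br L L.
Proof. case: HL => HLs HLb; split => //. Qed.

Lemma ideal_inter I J : lie_ideal br L I -> lie_ideal br L J ->
  lie_ideal br L (fun x => I x /\ J x).
Proof.
case=> HI1 [HI2 HI3 HI4] HI5 [HJ1 [HJ2 HJ3 HJ4] HJ5]; split.
- by move=> x [/HI1].
- split => //; first by move=> x y [? ?] [? ?]; split; auto.
  by move=> a x [? ?]; split; auto.
- by move=> x y Hx [? ?]; split; auto.
Qed.

Lemma ideal_ann P : lie_ideal br L P ->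
  lie_ideal br L (fun r => L r /\ forall p, P p -> br r p = 0).
Proof.
move=> HPi; case: HL => [[HL0 HLD HLZ] HLb]; split.
- by move=> x [].
- split.
  + by split => // p _; rewrite br0l.
  + move=> x y [Hx Hx'] [Hy Hy']; split; first by auto.
    by move=> p Hp; rewrite brDl Hx' // Hy' // addr0.
  + move=> a x [Hx Hx']; split; first by auto.
    by move=> p Hp; rewrite brZl Hx' // scaler0.
- move=> x r Hx [Hr Hr']; split; first by auto.
  move=> p Hp. have := jac1 x r p. rewrite Hr' // br0r Hr' ?addr0 //.
  by case: HPi => _ _ H; apply: H.
Qed.

Lemma abzero R x : lie_ideal br L R ->
  (forall x y, R x -> R y -> br x y = 0) -> R x -> x = 0.
Proof.
move=> HR Hab Hx; apply: NNPP => Hx0.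
have [a [b [Ha [Hb Hab']]]] := HP HR (ex_intro _ x (conj Hx Hx0)).
by apply: Hab'; apply: Hab.
Qed.

Lemma annself P r : lie_ideal br L P -> P r ->
  (forall p, P p -> br r p = 0) -> r = 0.
Proof.
move=> HPi Hr Hr'.
have HPL : L r by case: HPi => H _ _; apply: H.
apply: (@abzero (fun x => P x /\ (L x /\ forall p, P p -> br x p = 0))).
- exact: ideal_inter (ideal_ann HPi).
- by move=> x y [_ [_ Hx]] [Hy _]; apply: Hx.
- by split => //; split.
Qed.

Lemma dense_L : dense L.
Proof.
split; first exact: ideal_L.
move=> a Ha Ha'; exact: (annself ideal_L Ha Ha').
Qed.

Lemma dense_inter K J : dense K -> dense J -> dense (fun x => K x /\ J x).
Proof.
move=> [HK HKa] [HJ HJa]; split; first exact: ideal_inter.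
move=> n Hn Hn'.
have HKJ := ideal_inter HK HJ.
have HN := ideal_ann HKJ.
apply: HKa => // k Hk.
have HkL : L k by case: HK => H _ _; apply: H.
have Hnk : L (br n k) by case: HL => _ H; apply: H.
apply: HJa => // j Hj.
have HjL : L j by case: HJ => H _ _; apply: H.
have HnkK : K (br n k) by case: HK => _ _ H; apply: H.
have Hnkj : K (br (br n k) j) by apply: ideal_brr.
have HnkjJ : J (br (br n k) j) by case: HJ => _ _ H; apply: H.
have HNn : L (br (br n k) j) by case: HL => _ H; apply: H.
apply: (@annself (fun x => K x /\ J x)) => //.
move=> p Hp.
have := ideal_brr HN (ideal_brr HN (conj Hn Hn') HkL) HjL.
by case=> _; apply.
Qed.

Lemma annMM M a : dense M -> L a ->
  (forall m m', M m -> M m' -> br a (br m m') = 0) -> a = 0.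
Proof.
move=> [HM HMa] Ha Ha'.
have HML : forall m, M m -> L m by case: HM.
have HMb : forall x m, L x -> M m -> M (br x m) by case: HM.
pose A := fun a => L a /\ forall m m', M m -> M m' -> br a (br m m') = 0.
have HA : lie_ideal br L A.
  case: HL => [[HL0 HLD HLZ] HLb]; split.
  - by move=> x [].
  - split.
    + by split => // m m' _ _; rewrite br0l.
    + move=> x y [Hx Hx'] [Hy Hy']; split; first by auto.
      by move=> m m' Hm Hm'; rewrite brDl Hx' // Hy' // addr0.
    + move=> c x [Hx Hx']; split; first by auto.
      by move=> m m' Hm Hm'; rewrite brZl Hx' // scaler0.
  - move=> x b Hx [Hb Hb']; split; first by auto.
    move=> m m' Hm Hm'. have := jac1 x b (br m m').
    have H1 : M (br x m) by apply: HMb.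
    have H2 : M (br x m') by apply: HMb.
    rewrite Hb' // br0r (jac1 x m m') brDr (Hb' (br x m) m') //.
    rewrite (Hb' m (br x m')) // !addr0.
    by move/esym.
have HPi := ideal_inter HA HM.
have HPab : forall p p', A p /\ M p -> A p' /\ M p' -> br p p' = 0.
  move=> p p' Hp Hp'.
  apply: (annself HPi).
  - case: HPi => H1 _ H3. apply: H3 => //. by case: Hp => [[]].
  - move=> p'' [[_ Hp''] _]. rewrite brC Hp'' ?oppr0 //.
    + by case: Hp.
    + by case: Hp'.
have HP0 : forall p, A p /\ M p -> p = 0.
  move=> p Hp. exact: (abzero HPi HPab Hp).
apply: HMa => // m Hm. apply: HP0. split.
- exact: (ideal_brr HA (conj Ha Ha') (HML _ Hm)).
- by apply: HMb.
Qed.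

Lemma ga_lin (S : Q -> Prop) f : gen_alg br S f ->
  (forall x y, f (x + y) = f x + f y) /\ (forall (a : Phi) x, f (a *: x) = a *: f x).
Proof.
elim=> [y Hy | | f1 g1 _ [IH1 IH2] _ [IH3 IH4] | c f1 _ [IH1 IH2] | f1 g1 _ [IH1 IH2] _ [IH3 IH4]].
- by split => *; rewrite /ad ?brDr ?brZr.
- by split => *; rewrite /op0 ?addr0 ?scaler0.
- split => *; rewrite /opadd ?IH1 ?IH2 ?IH3 ?IH4 //.
  + by rewrite addrACA.
  + by rewrite scalerDr.
- split => *; rewrite /opscale ?IH1 ?IH2 //.
  + by rewrite scalerDr.
  + by rewrite !scalerA mulrC.
- by split => *; rewrite /opmul ?IH3 ?IH4 ?IH1 ?IH2.
Qed.

Lemma ga0 (S : Q -> Prop) f : gen_alg br S f -> f 0 = 0.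
Proof. by move/ga_lin => [_ H]; have := H 0 0; rewrite !scale0r. Qed.

Lemma ga_mono (S T : Q -> Prop) f : (forall x, S x -> T x) ->
  gen_alg br S f -> gen_alg br T f.
Proof.
move=> HST; elim => *; first by apply: ga_ad; auto.
- exact: ga_0.
- by apply: ga_add.
- by apply: ga_scale.
- by apply: ga_mul.
Qed.

Lemma AQL_I I f x : lie_ideal br L I -> AQL br L f -> I x -> I (f x).
Proof.
move=> [HIL [HI0 HID HIZ] HIb] Hf; elim: Hf x.
- by move=> y Hy x Hx; apply: HIb.
- by move=> x _; rewrite /op0.
- by move=> f1 g1 _ IH1 _ IH2 x Hx; rewrite /opadd; apply: HID; auto.
- by move=> c f1 _ IH1 x Hx; rewrite /opscale; apply: HIZ; auto.
- by move=> f1 g1 _ IH1 _ IH2 x Hx; rewrite /opmul; auto.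
Qed.

Definition V (I K : Q -> Prop) v := forall y, I y -> K (br y v).

Lemma AQL_V I f v : lie_ideal br L I -> AQL br L f -> V I L v -> V I L (f v).
Proof.
move=> HI Hf; elim: Hf v.
- move=> x Hx v Hv y Hy. rewrite /ad jac1.
  case: HL => [[HL0 HLD HLZ] HLb]. apply: HLD; last by apply: HLb; auto.
  apply: Hv. exact: ideal_brr.
- move=> v _ y _; rewrite /op0 br0r. by case: HL => [[]].
- move=> f1 g1 _ IH1 _ IH2 v Hv y Hy; rewrite /opadd brDr.
  case: HL => [[HL0 HLD HLZ] HLb]; apply: HLD; [exact: IH1 | exact: IH2].
- move=> c f1 _ IH1 v Hv y Hy; rewrite /opscale brZr.
  case: HL => [[HL0 HLD HLZ] HLb]; apply: HLZ; exact: IH1.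
- by move=> f1 g1 _ IH1 _ IH2 v Hv; rewrite /opmul; auto.
Qed.

Lemma tilde_AQL I f : lie_ideal br L I -> tilde br L I f -> AQL br L f.
Proof.
move=> [HIL _ _]; elim.
- by move=> x Hx; apply: ga_ad; auto.
- exact: ga_0.
- by move=> *; apply: ga_add.
- by move=> *; apply: ga_scale.
- by move=> *; apply: ga_mul.
- by move=> *; apply: ga_mul.
Qed.

Lemma tilde_I I f x : lie_ideal br L I -> tilde br L I f -> L x -> I (f x).
Proof.
move=> HI Hf; elim: Hf x.
- by move=> y Hy x Hx; rewrite /ad; apply: ideal_brr.
- by move=> x _; rewrite /op0; case: HI => _ [].
- move=> f1 g1 _ IH1 _ IH2 x Hx; rewrite /opadd.
  by case: HI => _ [_ HID _] _; apply: HID; auto.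
- move=> c f1 _ IH1 x Hx; rewrite /opscale.
  by case: HI => _ [_ _ HIZ] _; apply: HIZ; auto.
- by move=> a f1 Ha _ IH x Hx; rewrite /opmul; apply: (AQL_I HI Ha); auto.
- move=> f1 a _ IH Ha x Hx; rewrite /opmul; apply: IH.
  exact: (AQL_I ideal_L Ha).
Qed.

Lemma tilde_V I f v : lie_ideal br L I -> tilde br L I f -> V I L v -> L (f v).
Proof.
move=> HI Hf; elim: Hf v.
- by move=> y Hy v Hv; apply: Hv.
- by move=> v _; rewrite /op0; case: HL => [[]].
- move=> f1 g1 _ IH1 _ IH2 v Hv; rewrite /opadd.
  by case: HL => [[_ HLD _] _]; apply: HLD; auto.
- move=> c f1 _ IH1 v Hv; rewrite /opscale.
  by case: HL => [[_ _ HLZ] _]; apply: HLZ; auto.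
- by move=> a f1 Ha _ IH v Hv; rewrite /opmul; apply: (AQL_I ideal_L Ha); auto.
- move=> f1 a _ IH Ha v Hv; rewrite /opmul; apply: IH.
  exact: (AQL_V HI Ha).
Qed.

Inductive spanB (M : Q -> Prop) : Q -> Prop :=
  | sb_br m m' : M m -> M m' -> spanB M (br m m')
  | sb_0 : spanB M 0
  | sb_add x y : spanB M x -> spanB M y -> spanB M (x + y)
  | sb_scale (a : Phi) x : spanB M x -> spanB M (a *: x).

Lemma dense_sub K : dense K -> submodule K.
Proof. by case=> [[]]. Qed.
Lemma dense_L' K x : dense K -> K x -> L x.
Proof. by case=> [[H _ _] _]; apply: H. Qed.

Lemma spanB_ideal M : lie_ideal br L M -> lie_ideal br L (spanB M).
Proof.
move=> HM; have HML : forall m, M m -> L m by case: HM.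
case: HL => [[HL0 HLD HLZ] HLb].
split.
- by move=> x; elim => *; auto.
- split; [exact: sb_0 | exact: sb_add | exact: sb_scale].
- move=> x z Hx; elim.
  + move=> m m' Hm Hm'; rewrite jac1; apply: sb_add; apply: sb_br => //;
    by case: HM => _ _ H; apply: H.
  + by rewrite br0r; apply: sb_0.
  + by move=> u w _ Hu _ Hw; rewrite brDr; apply: sb_add.
  + by move=> a u _ Hu; rewrite brZr; apply: sb_scale.
Qed.

Lemma base q K : algebra_of_quotients br L -> dense K ->
  exists I, dense I /\ (forall y, I y -> K y) /\ (forall y, I y -> K (br y q)).
Proof.
move=> HQ HK.
have [->|Hq] := classic (q = 0).
  exists K; split => //; split => // y _; rewrite br0r.
  by case: (dense_sub HK).
have [J [HJi [HJa [HJL _]]]] := HQ q Hq.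
have HM := dense_inter HK (conj HJi HJa).
have HMi : lie_ideal br L (fun x => K x /\ J x) by case: HM.
have HKi : lie_ideal br L K by case: HK.
have HKs := dense_sub HK.
have HSi := spanB_ideal HMi.
exists (spanB (fun x => K x /\ J x)); split; [split => // | split].
- move=> a Ha Ha'. apply: (annMM HM Ha) => m m' Hm Hm'. apply: Ha'.
  exact: sb_br.
- move=> z; elim.
  + move=> m m' [Hm _] [Hm' _]. apply: ideal_brr => //. exact: dense_L' Hm'.
  + by case: HKs.
  + by case: HKs => _ H _ *; apply: H.
  + by case: HKs => _ _ H *; apply: H.
- move=> z; elim.
  + move=> m m' [Hm HmJ] [Hm' Hm'J].
    have E := jac1 m m' q.
    rewrite -[br (br m m') q](addrK (br m' (br m q))) -E.
    apply: sub_sub => //; apply: ideal_brr => //; exact: HJL.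
  + by rewrite br0l; case: HKs.
  + by move=> x y _ Hx _ Hy; rewrite brDl; case: HKs => _ H _; apply: H.
  + by move=> a x _ Hx; rewrite brZl; case: HKs => _ _ H; apply: H.
Qed.

Definition Cg (mu : Q -> Q) := forall K, dense K -> exists K0, dense K0 /\
  (forall z, K0 z -> K (mu z)) /\
  forall J, dense J -> exists I, dense I /\ forall v, V J K0 v -> V I K (mu v).

Lemma C_all mu : algebra_of_quotients br L -> AQ br mu -> Cg mu.
Proof.
move=> HQ; elim.
- move=> q _ K HK.
  have [K0 [HK0 [HK0K HK0q]]] := base q HQ HK.
  have HKs := dense_sub HK.
  exists K0; split => //; split.
    by move=> z Hz; rewrite /ad brC; apply: sub_opp => //; apply: HK0q.
  move=> J HJ.
  have [I [HI [HIJ HIq]]] := base q HQ HJ.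
  exists I; split => // v Hv y Hy. rewrite /ad jac1.
  case: HKs => _ HKD _; apply: HKD.
  + apply: HK0K; apply: Hv; exact: HIq.
  + rewrite brC; apply: sub_opp; first exact: dense_sub HK.
    apply: HK0q; apply: Hv; exact: HIJ.
- move=> K HK; exists K; split => //; split.
    by move=> z _; rewrite /op0; case: (dense_sub HK).
  move=> J HJ; exists J; split => // v _ y _; rewrite /op0 br0r.
  by case: (dense_sub HK).
- move=> f g _ IHf _ IHg K HK.
  have [K1 [HK1 [Hf1 Hf2]]] := IHf K HK.
  have [K2 [HK2 [Hg1 Hg2]]] := IHg K HK.
  have HKs := dense_sub HK.
  exists (fun x => K1 x /\ K2 x); split; first exact: dense_inter.
  split.
    by move=> z [Hz1 Hz2]; rewrite /opadd; case: HKs => _ H _; apply: H; auto.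
  move=> J HJ.
  have [I1 [HI1 HI1v]] := Hf2 J HJ.
  have [I2 [HI2 HI2v]] := Hg2 J HJ.
  exists (fun x => I1 x /\ I2 x); split; first exact: dense_inter.
  move=> v Hv y [Hy1 Hy2]; rewrite /opadd brDr.
  case: HKs => _ H _; apply: H.
  + apply: HI1v => // y' Hy'; by case: (Hv y' Hy').
  + apply: HI2v => // y' Hy'; by case: (Hv y' Hy').
- move=> a f _ IHf K HK.
  have [K1 [HK1 [Hf1 Hf2]]] := IHf K HK.
  have HKs := dense_sub HK.
  exists K1; split => //; split.
    by move=> z Hz; rewrite /opscale; case: HKs => _ _ H; apply: H; auto.
  move=> J HJ.
  have [I1 [HI1 HI1v]] := Hf2 J HJ.
  exists I1; split => // v Hv y Hy; rewrite /opscale brZr.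
  case: HKs => _ _ H; apply: H. exact: HI1v.
- move=> f g _ IHf _ IHg K HK.
  have [K1 [HK1 [Hf1 Hf2]]] := IHf K HK.
  have [K0 [HK0 [Hg1 Hg2]]] := IHg K1 HK1.
  exists K0; split => //; split.
    by move=> z Hz; rewrite /opmul; auto.
  move=> J HJ.
  have [I1 [HI1 HI1v]] := Hg2 J HJ.
  have [I [HI HIv]] := Hf2 I1 HI1.
  exists I; split => // v Hv; rewrite /opmul; auto.
Qed.

Lemma annQ I u : algebra_of_quotients br L -> dense I ->
  (forall y, I y -> br y u = 0) -> u = 0.
Proof.
move=> HQ [HIi HIa] Hu; apply: NNPP => Hu0.
have [J [HJi [HJa [HJL [j [Hj Hju]]]]]] := HQ u Hu0.
apply: Hju; apply: HIa; first exact: HJL.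
move=> y Hy. rewrite brC jac1.
have HjL : L j by case: HJi => H _ _; apply: H.
have Hyj : I (br y j) by apply: ideal_brr.
by rewrite (Hu y Hy) (Hu _ Hyj) br0r addr0 oppr0.
Qed.

Lemma L_sub : submodule L.
Proof. by case: HL. Qed.
Lemma L_br x y : L x -> L y -> L (br x y).
Proof. by case: HL => _ H; apply: H. Qed.

Lemma dir1 : algebra_of_quotients br L ->
   (center_zero br /\
    forall mu : Q -> Q, AQ br mu -> mu <> @op0 _ Q ->
      exists I : Q -> Prop,
        lie_ideal br L I /\ ann_zero br L I /\
        (forall alpha, tilde br L I alpha -> A0 br L (opmul mu alpha)) /\
        (forall alpha, tilde br L I alpha -> A0 br L (opmul alpha mu)) /\
        (exists alpha, tilde br L I alpha /\ opmul alpha mu <> @op0 _ Q) /\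
        ((exists q, mu = ad br q) ->
           exists alpha x, tilde br L I alpha /\ L x /\ mu (alpha x) <> 0)).
Proof.
move=> HQ; split.
  move=> z Hz; apply: NNPP => Hz0.
  have [I [_ [_ [_ [x [_ Hx]]]]]] := HQ z Hz0.
  by apply: Hx; rewrite brC Hz oppr0.
move=> mu HAQ Hmu0.
have [K0 [HK0 [HK0m HK0J]]] := C_all HQ HAQ dense_L.
have [I0 [HI0 HI0v]] := HK0J K0 HK0.
have HI := dense_inter HI0 HK0.
set I := (fun x => I0 x /\ K0 x) in HI *.
have [HIi HIa] := HI.
have HK0i : lie_ideal br L K0 by case: HK0.
exists I; split => //; split => //.
split.
  move=> alpha Ha; split.
    apply: ga_mul => //. apply: (@ga_mono L) => //. exact: tilde_AQL Ha.
  move=> x Hx; rewrite /opmul. apply: HK0m.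
  by case: (tilde_I HIi Ha Hx).
split.
  move=> alpha Ha; split.
    apply: ga_mul => //. apply: (@ga_mono L) => //. exact: tilde_AQL Ha.
  move=> x Hx; rewrite /opmul. apply: (tilde_V HIi Ha).
  move=> y [Hy0 Hy1]. apply: HI0v => // y' Hy'. exact: ideal_brr.
split.
  have [w Hw] : exists w, mu w <> 0.
    apply: NNPP => H; apply: Hmu0; apply: functional_extensionality => w.
    by apply: NNPP => Hw; apply: H; exists w.
  have [y [Hy Hyw]] : exists y, I y /\ br y (mu w) <> 0.
    apply: NNPP => H; apply: Hw; apply: (annQ HQ HI) => y Hy.
    by apply: NNPP => Hyw; apply: H; exists y.
  exists (ad br y); split; first exact: ti_ad.
  by move=> E; apply: Hyw; have := f_equal (fun f => f w) E.
move=> [q Eq]; subst mu.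
apply: NNPP => H.
have H0 : forall y x, I y -> L x -> br q (br y x) = 0.
  move=> y x Hy Hx; apply: NNPP => Hne; apply: H.
  by exists (ad br y), x; split; [exact: ti_ad | split].
have Hq : q <> 0.
  move=> Eq; apply: Hmu0; apply: functional_extensionality => w.
  by rewrite /ad Eq br0l.
have [J [HJi [HJa [HJL [j [Hj Hjq]]]]]] := HQ q Hq.
have HjL : L j by case: HJi => Hh _ _; apply: Hh.
apply: Hjq; apply: (annMM HI (HJL _ Hj)) => m m' Hm Hm'.
have Hm'L : L m' by case: HIi => Hh _ _; apply: Hh.
have Hw : I (br m m') by apply: ideal_brr.
have := jac1 j q (br m m').
rewrite (H0 m m') // br0r (brC j (br m m')) brNr (H0 (br m m') j) // oppr0 addr0.
by move/esym.
Qed.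

Lemma dir2 :
   (center_zero br /\
    forall mu : Q -> Q, AQ br mu -> mu <> @op0 _ Q ->
      exists I : Q -> Prop,
        lie_ideal br L I /\ ann_zero br L I /\
        (forall alpha, tilde br L I alpha -> A0 br L (opmul mu alpha)) /\
        (forall alpha, tilde br L I alpha -> A0 br L (opmul alpha mu)) /\
        (exists alpha, tilde br L I alpha /\ opmul alpha mu <> @op0 _ Q) /\
        ((exists q, mu = ad br q) ->
           exists alpha x, tilde br L I alpha /\ L x /\ mu (alpha x) <> 0)) ->
   algebra_of_quotients br L.
Proof.
move=> [HZ Hii] q Hq.
have Had : ad br q <> @op0 _ Q.
  move=> E; apply: Hq; apply: HZ => y.
  by have := f_equal (fun f => f y) E.
have HAQ : AQ br (ad br q) by apply: ga_ad.
have [I [HIi [HIa [Hmu [_ [_ Hlast]]]]]] := Hii _ HAQ Had.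
have [alpha0 [x0 [Ha0 [Hx0 Hne]]]] := Hlast (ex_intro _ q erefl).
have [HL0 HLD HLZ] := L_sub.
pose I' := fun z => L z /\ L (br q z) /\ forall b, AQL br L b -> L (br q (b z)).
have HI'b : forall alpha x, tilde br L I alpha -> L x -> I' (alpha x).
  move=> alpha x Ha Hx; split; last split.
  - exact: (AQL_I ideal_L (tilde_AQL HIi Ha)).
  - by have [_ H] := Hmu _ Ha; apply: H.
  - move=> b Hb. have [_ H] := Hmu _ (ti_mull Hb Ha); exact: H.
exists I'; split; last split; last split.
- split.
  + by move=> z [].
  + split.
    * split => //; rewrite br0r //; split => // b Hb; by rewrite (ga0 Hb) br0r.
    * move=> x y [Hx [Hx1 Hx2]] [Hy [Hy1 Hy2]]; split; first by auto.
      rewrite brDr; split; first by auto.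
      move=> b Hb; have [Hb1 _] := ga_lin Hb; rewrite Hb1 brDr; auto.
    * move=> a x [Hx [Hx1 Hx2]]; split; first by auto.
      rewrite brZr; split; first by auto.
      move=> b Hb; have [_ Hb2] := ga_lin Hb; rewrite Hb2 brZr; auto.
  + move=> x z Hx [Hz [Hz1 Hz2]]; split; first exact: L_br.
    split.
    * exact: (Hz2 (ad br x) (ga_ad _ Hx)).
    * move=> b Hb; exact: (Hz2 (opmul b (ad br x)) (ga_mul Hb (ga_ad _ Hx))).
- move=> a Ha Ha'. apply: (annMM (conj HIi HIa) Ha) => m m' Hm Hm'.
  apply: Ha'. have Hm'L : L m'.
    by case: HIi => H _ _; apply: H.
  exact: (HI'b (ad br m) m' (ti_ad _ _ Hm) Hm'L).
- move=> x [Hx [Hx1 _]]; rewrite brC; exact: sub_opp L_sub Hx1.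
- exists (alpha0 x0); split; first exact: HI'b.
  rewrite brC => /eqP; rewrite oppr_eq0 => /eqP; exact: Hne.
Qed.
End S.

Unset Implicit Arguments.
Set Strict Implicit.

Theorem mainTheorem1 (Phi : comPzRingType) (Q : lmodType Phi)
  (br : Q -> Q -> Q) (L : Q -> Prop) :
  lie_bracket br -> lie_subalgebra br L -> semiprime br L ->
  (algebra_of_quotients br L <->
   (center_zero br /\
    forall mu : Q -> Q, AQ br mu -> mu <> @op0 _ Q ->
      exists I : Q -> Prop,
        lie_ideal br L I /\ ann_zero br L I /\
        (forall alpha, tilde br L I alpha -> A0 br L (opmul mu alpha)) /\
        (forall alpha, tilde br L I alpha -> A0 br L (opmul alpha mu)) /\
        (exists alpha, tilde br L I alpha /\ opmul alpha mu <> @op0 _ Q) /\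
        ((exists q, mu = ad br q) ->
           exists alpha x, tilde br L I alpha /\ L x /\ mu (alpha x) <> 0))).
Proof.
move=> HB HL HP; split; [exact: dir1 | exact: dir2].
Qed.
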